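(* Let $\Sigma$ be an alphabet and $(\mathcal{O},d)$ a pseudometric space. The functor $H=V\circ K:\mathbf{HS}_{\Sigma}\to\mathbf{Tr}_{\Sigma\times\mathbb{R}_{\ge0}}\mathcal{O}$ is a coreflection, and the unit and counit of this adjunction are $0$-bounded morphisms.
   Context: A hybrid system is a tuple $(M,I,(n_i)_{i\in I},E,(G_e)_{e\in E},(R_{e,i})_{e\in E,i\in I},(F_{m,i})_{m\in M,i\in I},(I_m)_{m\in M},m_0,\sigma_0,o)$ where $M$ is a set of modes, $I$ a set of subsystems, $n_i\in\mathbb{N}$, $E\subseteq M\times\Sigma\times M$ a set of events, $G_e\subseteq\prod_{i\in I}\mathbb{R}^{n_i}$ guards, $R_{e,i}:\mathbb{R}^{n_i}\to\mathbb{R}^{n_i}$ reset functions, $F_{m,i}:\mathbb{R}\times\mathbb{R}^{n_i}\to\mathbb{R}^{n_i}$ continuous flow functions that are locally Lipschitz in the second argument, $I_m\subseteq\prod_{i}\mathbb{R}^{n_i}$ invariants, $m_0\in M$, $\sigma_0=(\sigma_{i,0})_i\in\prod_i\mathbb{R}^{n_i}$, and $o:M\times\prod_i\mathbb{R}^{n_i}\to\mathcal{O}$. The system moves from configuration $(m,\sigma)$ to $(m',\sigma')$ doing action $a$ with time $t\ge0$ if $e=(m,a,m')\in E$ and for every $i\in I$ there is a differentiable $x_i:[0,t]\to\mathbb{R}^{n_i}$ with $\dot x_i(s)=F_{m,i}(s,x_i(s))$ and $(x_i(s))_i\in I_m$ for all $s\in[0,t]$, $(x_i(0))_i=\sigma$,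 $(x_i(t))_i\in G_e$, and $\sigma'=(R_{e,i}(x_i(t)))_i$. A run is a sequence $(m_0,\sigma_0)\xrightarrow{a_1,t_1}\cdots\xrightarrow{a_k,t_k}(m_k,\sigma_k)$ of such moves starting at the initial configuration. An $\epsilon$-bounded morphism $T\to T'$ is a pair $(f_M,f_I)$ with $f_M:M\to M'$, $f_I:I'\to I$ such that: $f_M(m_0)=m'_0$; $(m,a,m')\in E$ implies $f_E(m,a,m'):=(f_M(m),a,f_M(m'))\in E'$; for all $i'\in I'$, $n_{i'}=n_{f_I(i')}$, $F_{m,f_I(i')}=F'_{f_M(m),i'}$ for all $m$, and $R_{e,f_I(i')}=R'_{f_E(e),i'}$ for all $e$; writing $f_X((x_i)_{i\in I})=(x_{f_I(i')})_{i'\in I'}$, one has $f_X(\sigma_0)=\sigma'_0$, $\sigma\in I_m\Rightarrow f_X(\sigma)\in I'_{f_M(m)}$, $\sigma\in G_e\Rightarrow f_X(\sigma)\in G'_{f_E(e)}$; and for every run ending in $(m_k,\sigma_k)$, $d(o(m_k,\sigma_k),o'(f_M(m_k),f_X(\sigma_k)))\le\epsilon$. Bounded morphisms (those $\epsilon$-bounded for some $\epsilon\ge0$) with composition $(g_M,g_I)\circ(f_M,f_I)=(g_M\circ f_M,f_I\circ g_I)$ form the category $\mathbf{HS}_{\Sigma}$. For an alphabet $A$, a transition system with observations is $(S,i,\Delta,\omega)$ with $\Delta\subseteq S\times A\times S$, $\omega:S\to\mathcal{O}$; an $\epsilon$-bounded morphism is a function on states preserving the initial state and transitions with $d(\omega(s),\omega'(f(s)))\le\epsilon$;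 bounded morphisms form $\mathbf{TS}_{A}\mathcal{O}$, and $\mathbf{Tr}_{A}\mathcal{O}$ is its full subcategory of systems whose underlying transition system is a synchronization tree (every state reached by exactly one run from the initial state). $K:\mathbf{HS}_{\Sigma}\to\mathbf{TS}_{\Sigma\times\mathbb{R}_{\ge0}}\mathcal{O}$ sends $T$ to the system whose states are configurations $(m,\sigma)\in M\times\prod_i\mathbb{R}^{n_i}$, initial state $(m_0,\sigma_0)$, transitions $((m,\sigma),(a,t),(m',\sigma'))$ whenever $T$ moves from $(m,\sigma)$ to $(m',\sigma')$ doing $a$ with time $t$, and observation $o$; on morphisms $K(f_M,f_I)(m,\sigma)=(f_M(m),f_X(\sigma))$. $V:\mathbf{TS}_{A}\mathcal{O}\to\mathbf{Tr}_{A}\mathcal{O}$ sends a system to the tree of its runs (initial state the one-element run, transitions extending a run by one transition) with observation of a run equal to the observation of its last state, acting pointwise on morphisms. A functor is a coreflection if it is a right adjoint whose left adjoint is fully faithful (equivalently, a right adjoint whose unit is a natural isomorphism). *)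

(* Defs.v *)
From Stdlib Require Import Reals List.
From Stdlib Require Fin.
Open Scope R_scope.

Definition vec (n : nat) : Type := Fin.t n -> R.

Definition cast {a b : nat} (p : a = b) (v : vec a) : vec b :=
  eq_rect a vec v b p.

Definition cont2 {n : nat} (F : R -> vec n -> vec n) : Prop :=
  forall (t0 : R) (x0 : vec n) (eps : R), 0 < eps ->
    exists delta, 0 < delta /\
      forall t x, Rabs (t - t0) < delta -> (forall j, Rabs (x j - x0 j) < delta) ->
        forall k, Rabs (F t x k - F t0 x0 k) < eps.

Definition loc_lipschitz {n : nat} (F : R -> vec n -> vec n) : Prop :=
  forall (t0 : R) (x0 : vec n), exists r L, 0 < r /\ 0 <= L /\
    forall t x y, Rabs (t - t0) < r ->
      (forall j, Rabs (x j - x0 j) < r) -> (forall j, Rabs (y j - x0 j) < r) ->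
      forall delta, (forall j, Rabs (x j - y j) <= delta) ->
        forall k, Rabs (F t x k - F t y k) <= L * delta.

Definition deriv_within (a b : R) (f : R -> R) (s v : R) : Prop :=
  forall eps, 0 < eps -> exists delta, 0 < delta /\
    forall h, h <> 0 -> Rabs h < delta -> a <= s + h <= b ->
      Rabs ((f (s + h) - f s) / h - v) < eps.

Definition nnR : Type := {t : R | 0 <= t}.

Section Systems.
Variable Sigma : Type.
Variable O : Type.
Variable d : O -> O -> R.

Record HSys : Type := {
  hM : Type;
  hI : Type;
  hn : hI -> nat;
  hE : hM * Sigma * hM -> Prop;
  hG : {e : hM * Sigma * hM | hE e} -> (forall i : hI, vec (hn i)) -> Prop;
  hR : {e : hM * Sigma * hM | hE e} -> forall i : hI, vec (hn i) -> vec (hn i);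
  hF : hM -> forall i : hI, R -> vec (hn i) -> vec (hn i);
  hF_cont : forall m i, cont2 (hF m i);
  hF_lip : forall m i, loc_lipschitz (hF m i);
  hInv : hM -> (forall i : hI, vec (hn i)) -> Prop;
  hm0 : hM;
  hs0 : forall i : hI, vec (hn i);
  ho : hM -> (forall i : hI, vec (hn i)) -> O
}.

Definition hstate (S : HSys) : Type := forall i : hI S, vec (hn S i).
Definition config (S : HSys) : Type := (hM S * hstate S)%type.

Definition hstep (S : HSys) (c : config S) (a : Sigma) (t : R) (c' : config S) : Prop :=
  0 <= t /\
  exists he : hE S (fst c, a, fst c'),
  exists x : forall i : hI S, R -> vec (hn S i),
    (forall i, x i 0 = snd c i) /\
    (forall i s, 0 <= s <= t -> forall k,
        deriv_within 0 t (fun u => x i u k) s (hF S (fst c) i s (x i s) k)) /\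
    (forall s, 0 <= s <= t -> hInv S (fst c) (fun i => x i s)) /\
    hG S (exist _ (fst c, a, fst c') he) (fun i => x i t) /\
    snd c' = (fun i => hR S (exist _ (fst c, a, fst c') he) i (x i t)).

Inductive reach (S : HSys) : config S -> Prop :=
| reach0 : reach S (hm0 S, hs0 S)
| reachS : forall c a t c', reach S c -> hstep S c a t c' -> reach S c'.

Definition transport (S S' : HSys) (fI : hI S' -> hI S)
  (fdim : forall i', hn S (fI i') = hn S' i') (s : hstate S) : hstate S' :=
  fun i' => cast (fdim i') (s (fI i')).

Record HSmor (S S' : HSys) : Type := {
  fM : hM S -> hM S';
  fI : hI S' -> hI S;
  f_init : fM (hm0 S) = hm0 S';
  f_edge : forall m a m', hE S (m, a, m') -> hE S' (fM m, a, fM m');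
  f_dim : forall i', hn S (fI i') = hn S' i';
  f_flow : forall m i' t x,
      cast (f_dim i') (hF S m (fI i') t x) = hF S' (fM m) i' t (cast (f_dim i') x);
  f_reset : forall m a m' (he : hE S (m, a, m')) i' x,
      cast (f_dim i') (hR S (exist _ (m, a, m') he) (fI i') x)
      = hR S' (exist _ (fM m, a, fM m') (f_edge m a m' he)) i' (cast (f_dim i') x);
  f_s0 : transport S S' fI f_dim (hs0 S) = hs0 S';
  f_inv : forall m s, hInv S m s -> hInv S' (fM m) (transport S S' fI f_dim s);
  f_guard : forall m a m' (he : hE S (m, a, m')) s,
      hG S (exist _ (m, a, m') he) s ->
      hG S' (exist _ (fM m, a, fM m') (f_edge m a m' he)) (transport S S' fI f_dim s);
  f_bounded : exists eps, 0 <= eps /\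
      forall m s, reach S (m, s) -> d (ho S m s) (ho S' (fM m) (transport S S' fI f_dim s)) <= eps
}.

Definition kmap (S S' : HSys) (h : HSmor S S') (c : config S) : config S' :=
  (fM S S' h (fst c), transport S S' (fI S S' h) (f_dim S S' h) (snd c)).

Definition hs_zero_bounded (S S' : HSys) (h : HSmor S S') : Prop :=
  forall m s, reach S (m, s) -> d (ho S m s) (ho S' (fM S S' h m) (transport S S' (fI S S' h) (f_dim S S' h) s)) <= 0.

Definition hs_eq (S S' : HSys) (h h' : HSmor S S') : Prop :=
  (forall m, fM S S' h m = fM S S' h' m) /\ (forall i, fI S S' h i = fI S S' h' i).

Definition Lab : Type := (Sigma * nnR)%type.

Record TSys : Type := {
  tS : Type;
  ti : tS;
  tD : tS -> Lab -> tS -> Prop;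
  tw : tS -> O
}.

Record TSmor (T T' : TSys) : Type := {
  tf : tS T -> tS T';
  tf_init : tf (ti T) = ti T';
  tf_tr : forall s a s', tD T s a s' -> tD T' (tf s) a (tf s');
  tf_bounded : exists eps, 0 <= eps /\ forall s, d (tw T s) (tw T' (tf s)) <= eps
}.

Definition ts_zero_bounded (T T' : TSys) (f : TSmor T T') : Prop :=
  forall s, d (tw T s) (tw T' (tf T T' f s)) <= 0.

Fixpoint valid_from (T : TSys) (s : tS T) (l : list (Lab * tS T)) : Prop :=
  match l with
  | nil => True
  | (a, s') :: l' => tD T s a s' /\ valid_from T s' l'
  end.

Fixpoint last_st (T : TSys) (s : tS T) (l : list (Lab * tS T)) : tS T :=
  match l with
  | nil => s
  | (_, s') :: l' => last_st T s' l'
  end.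

Definition is_tree (T : TSys) : Prop :=
  forall s, exists! l, valid_from T (ti T) l /\ last_st T (ti T) l = s.

Definition run (T : TSys) : Type := {l : list (Lab * tS T) | valid_from T (ti T) l}.

Definition V (T : TSys) : TSys := {|
  tS := run T;
  ti := exist _ nil I;
  tD := fun r a r' => exists s', proj1_sig r' = proj1_sig r ++ (a, s') :: nil;
  tw := fun r => tw T (last_st T (ti T) (proj1_sig r))
|}.

Definition K (S : HSys) : TSys := {|
  tS := config S;
  ti := (hm0 S, hs0 S);
  tD := fun c a c' => hstep S c (fst a) (proj1_sig (snd a)) c';
  tw := fun c => ho S (fst c) (snd c)
|}.

Definition H (S : HSys) : TSys := V (K S).

Definition hmap (S S' : HSys) (h : HSmor S S') (l : list (Lab * config S))
  : list (Lab * config S') :=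
  map (fun p => (fst p, kmap S S' h (snd p))) l.

End Systems.

Arguments hM {Sigma O}. Arguments hI {Sigma O}. Arguments hn {Sigma O}.
Arguments hE {Sigma O}. Arguments hG {Sigma O}. Arguments hR {Sigma O}.
Arguments hF {Sigma O}. Arguments hInv {Sigma O}. Arguments hm0 {Sigma O}.
Arguments hs0 {Sigma O}. Arguments ho {Sigma O}.
Arguments hstate {Sigma O}. Arguments config {Sigma O}. Arguments hstep {Sigma O}.
Arguments reach {Sigma O}. Arguments transport {Sigma O}.
Arguments fM {Sigma O d S S'}. Arguments fI {Sigma O d S S'}.
Arguments f_dim {Sigma O d S S'}. Arguments f_edge {Sigma O d S S'}.
Arguments kmap {Sigma O d S S'}. Arguments hs_zero_bounded {Sigma O d S S'}.
Arguments hs_eq {Sigma O d S S'}.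
Arguments tS {Sigma O}. Arguments ti {Sigma O}. Arguments tD {Sigma O}. Arguments tw {Sigma O}.
Arguments tf {Sigma O d T T'}. Arguments ts_zero_bounded {Sigma O d T T'}.
Arguments valid_from {Sigma O}. Arguments last_st {Sigma O}.
Arguments is_tree {Sigma O}. Arguments run {Sigma O}.
Arguments V {Sigma O}. Arguments K {Sigma O}. Arguments H {Sigma O}.
Arguments hmap {Sigma O d S S'}.
Arguments TSmor {Sigma O} d T T'. Arguments HSmor {Sigma O} d S S'.

(* Main.v *)
Require Import Defs.
From Stdlib Require Import Reals List Lra Lia Classical FunctionalExtensionality ProofIrrelevance ClassicalEpsilon.
From Coquelicot Require Import Coquelicot.
Open Scope R_scope.

Lemma dw_restrict a b a' b' f s v :
  deriv_within a b f s v -> a <= a' -> b' <= b -> deriv_within a' b' f s v.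
Proof.
  intros H Ha Hb eps Heps. destruct (H eps Heps) as [dl [Hd Hh]].
  exists dl; split; auto. intros h H1 H2 H3. apply Hh; auto; lra.
Qed.

Lemma dw_sub a b f g s v w :
  deriv_within a b f s v -> deriv_within a b g s w ->
  deriv_within a b (fun u => f u - g u) s (v - w).
Proof.
  intros Hf Hg eps Heps.
  destruct (Hf (eps/2)) as [d1 [Hd1 H1]]; [lra|].
  destruct (Hg (eps/2)) as [d2 [Hd2 H2]]; [lra|].
  exists (Rmin d1 d2); split; [apply Rmin_pos; auto|].
  intros h Hh0 Hh Hab.
  assert (A1 := H1 h Hh0 (Rlt_le_trans _ _ _ Hh (Rmin_l _ _)) Hab).
  assert (A2 := H2 h Hh0 (Rlt_le_trans _ _ _ Hh (Rmin_r _ _)) Hab).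
  replace ((f (s + h) - g (s + h) - (f s - g s)) / h - (v - w))
    with (((f (s + h) - f s) / h - v) - ((g (s + h) - g s) / h - w))
    by (field; auto).
  eapply Rle_lt_trans; [apply Rabs_triang|]. rewrite Rabs_Ropp. lra.
Qed.

Lemma dw_lip a b f s v :
  deriv_within a b f s v -> exists dl, 0 < dl /\
    forall h, Rabs h < dl -> a <= s + h <= b ->
      Rabs (f (s + h) - f s) <= (Rabs v + 1) * Rabs h.
Proof.
  intros H. destruct (H 1) as [dl [Hd Hh]]; [lra|].
  exists dl; split; auto. intros h H1 H2.
  destruct (Req_dec h 0) as [->|Hn].
  { rewrite Rplus_0_r, Rminus_diag, Rabs_R0. lra. }
  assert (A := Hh h Hn H1 H2).
  replace (f (s + h) - f s) with (((f (s + h) - f s) / h - v) * h + v * h)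
    by (field; auto).
  eapply Rle_trans; [apply Rabs_triang|]. rewrite !Rabs_mult.
  assert (0 <= Rabs h) by apply Rabs_pos. nra.
Qed.

Lemma dw_cont a b f s v :
  deriv_within a b f s v -> forall eps, 0 < eps -> exists dl, 0 < dl /\
    forall u, Rabs (u - s) < dl -> a <= u <= b -> Rabs (f u - f s) < eps.
Proof.
  intros H eps Heps. destruct (dw_lip _ _ _ _ _ H) as [dl [Hd Hh]].
  assert (0 < Rabs v + 1) by (pose proof (Rabs_pos v); lra).
  exists (Rmin dl (eps / (Rabs v + 1))); split.
  { apply Rmin_pos; auto. apply Rdiv_lt_0_compat; auto. }
  intros u Hu Hab.
  assert (A := Hh (u - s) (Rlt_le_trans _ _ _ Hu (Rmin_l _ _))).
  replace (s + (u - s)) with u in A by ring.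
  specialize (A Hab).
  assert (Rabs (u - s) < eps / (Rabs v + 1)) by (eapply Rlt_le_trans; [apply Hu| apply Rmin_r]).
  apply Rle_lt_trans with (1 := A).
  apply Rmult_lt_reg_r with (/ (Rabs v + 1)). apply Rinv_0_lt_compat; auto.
  replace ((Rabs v + 1) * Rabs (u - s) * / (Rabs v + 1)) with (Rabs (u - s)) by (field; lra).
  exact H1.
Qed.
Definition clamp (a b u : R) := Rmax a (Rmin b u).

Lemma clamp_in a b u : a <= b -> a <= clamp a b u <= b.
Proof. intros. unfold clamp, Rmax, Rmin. repeat destruct Rle_dec; lra. Qed.

Lemma clamp_id a b u : a <= u <= b -> clamp a b u = u.
Proof. intros. unfold clamp, Rmax, Rmin. repeat destruct Rle_dec; lra. Qed.

Lemma clamp_dist a b u s : a <= s <= b -> Rabs (clamp a b u - s) <= Rabs (u - s).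
Proof. intros. unfold clamp, Rmax, Rmin. repeat destruct Rle_dec;
  unfold Rabs; repeat destruct Rcase_abs; lra. Qed.

Lemma mvi a b f v C :
  a <= b -> (forall u, a <= u <= b -> deriv_within a b f u (v u)) ->
  (forall u, a <= u <= b -> Rabs (v u) <= C) ->
  Rabs (f b - f a) <= C * (b - a).
Proof.
  intros Hab Hd Hv.
  destruct (Req_dec a b) as [<-|Hne].
  { rewrite Rminus_diag, Rabs_R0. lra. }
  assert (Hlt : a < b) by lra.
  set (g := fun u => f (clamp a b u)).
  assert (Hg : forall u, a <= u <= b -> g u = f u).
  { intros; unfold g; rewrite clamp_id; auto. }
  destruct (MVT_gen g a b v) as [c [Hc Heq]].
  - intros x [Hx1 Hx2]. rewrite Rmin_left in Hx1 by lra. rewrite Rmax_right in Hx2 by lra.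
    apply is_derive_Reals. intros eps Heps.
    destruct (Hd x (conj (Rlt_le _ _ Hx1) (Rlt_le _ _ Hx2)) eps Heps) as [dl [Hdl Hh]].
    assert (Hp : 0 < Rmin dl (Rmin (x - a) (b - x))).
    { repeat apply Rmin_pos; lra. }
    exists (mkposreal _ Hp). intros h Hh0 Hhl. simpl in Hhl.
    assert (Hh1 : Rabs h < dl) by (eapply Rlt_le_trans; [apply Hhl|apply Rmin_l]).
    assert (Hh2 : Rabs h < Rmin (x - a) (b - x)) by (eapply Rlt_le_trans; [apply Hhl|apply Rmin_r]).
    assert (Hh3 : Rabs h < x - a) by (eapply Rlt_le_trans; [apply Hh2|apply Rmin_l]).
    assert (Hh4 : Rabs h < b - x) by (eapply Rlt_le_trans; [apply Hh2|apply Rmin_r]).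
    assert (Hin : a <= x + h <= b) by (unfold Rabs in *; destruct Rcase_abs; lra).
    rewrite (Hg (x + h)) by auto. rewrite (Hg x) by lra.
    apply Hh; auto.
  - intros x _. 
    unfold continuity_pt, continue_in, limit1_in, limit_in. simpl. unfold R_dist.
    intros eps Heps.
    assert (Hcx := clamp_in a b x (Rlt_le _ _ Hlt)).
    destruct (dw_cont _ _ _ _ _ (Hd _ Hcx) eps Heps) as [dl [Hdl Hh]].
    exists dl; split; auto. intros u [_ Hu]. unfold g.
    apply Hh. 
    + eapply Rle_lt_trans; [|apply Hu].
      unfold clamp, Rmax, Rmin. repeat destruct Rle_dec; unfold Rabs; repeat destruct Rcase_abs; lra.
    + apply clamp_in; lra.
  - rewrite <- (Hg a), <- (Hg b) by lra. rewrite Heq.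
    rewrite Rmin_left in Hc by lra. rewrite Rmax_right in Hc by lra.
    rewrite Rabs_mult. rewrite (Rabs_right (b - a)) by lra.
    apply Rmult_le_compat_r; [lra|]. apply Hv; lra.
Qed.
Lemma fin_delta n (P : Fin.t n -> R -> Prop) :
  (forall k d d', 0 < d' <= d -> P k d -> P k d') ->
  (forall k, exists d, 0 < d /\ P k d) -> exists d, 0 < d /\ forall k, P k d.
Proof.
  induction n as [|n IH]; intros Hm Hk.
  - exists 1; split; [lra|]. intros k. apply (Fin.case0 (fun k => P k 1) k).
  - destruct (IH (fun k d => P (Fin.FS k) d)) as [d1 [Hd1 H1]].
    + intros; eapply Hm; eauto.
    + intros; apply Hk.
    + destruct (Hk Fin.F1) as [d0 [Hd0 H0]].
      exists (Rmin d0 d1); split; [apply Rmin_pos; auto|].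
      intros k. apply (Fin.caseS' k (fun k => P k (Rmin d0 d1))).
      * eapply Hm; [|apply H0]. split; [apply Rmin_pos; auto| apply Rmin_l].
      * intros p. eapply Hm; [|apply H1]. split; [apply Rmin_pos; auto| apply Rmin_r].
Qed.

Lemma small_zero z B : 0 <= B -> (forall n, Rabs z <= B * (/2) ^ n) -> z = 0.
Proof.
  intros HB H. destruct (Req_dec z 0) as [|Hz]; auto. exfalso.
  assert (Hpz : 0 < Rabs z) by (apply Rabs_pos_lt; auto).
  destruct (pow_lt_1_zero (/2)) with (y := Rabs z / (B + 1)) as [N HN].
  - rewrite Rabs_right; lra.
  - apply Rdiv_lt_0_compat; lra.
  - specialize (HN N (le_n _)). specialize (H N).
    rewrite Rabs_right in HN by (apply Rle_ge, pow_le; lra).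
    assert (B * (/2)^N <= B * (Rabs z / (B+1))) by (apply Rmult_le_compat_l; lra).
    assert (B * (Rabs z / (B + 1)) < Rabs z).
    { apply Rmult_lt_reg_r with (B + 1); [lra|].
      replace (B * (Rabs z / (B + 1)) * (B + 1)) with (B * Rabs z) by (field; lra). nra. }
    lra.
Qed.

Definition sol {n : nat} (F : R -> vec n -> vec n) (x : R -> vec n) (t : R) : Prop :=
  forall s, 0 <= s <= t -> forall k,
    deriv_within 0 t (fun u => x u k) s (F s (x s) k).

Lemma ode_local n (F : R -> vec n -> vec n) (Hlip : loc_lipschitz F) t x y tau :
  sol F x t -> sol F y t -> 0 <= tau < t -> x tau = y tau ->
  exists dl, 0 < dl /\ tau + dl <= t /\
    forall s, tau <= s <= tau + dl -> forall k, x s k = y s k.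
Proof.
  intros Hx Hy Htau Heq.
  destruct (Hlip tau (x tau)) as [r [L [Hr [HL HLip]]]].
  destruct (fin_delta n (fun j d => forall s, 0 <= s <= t -> Rabs (s - tau) < d ->
      Rabs (x s j - x tau j) < r /\ Rabs (y s j - x tau j) < r)) as [d1 [Hd1 H1]].
  { intros k d d' Hd HP s Hs Hsd. apply HP; auto. lra. }
  { intros k.
    destruct (dw_cont _ _ _ _ _ (Hx tau (conj (proj1 Htau) (Rlt_le _ _ (proj2 Htau))) k) r Hr)
      as [da [Hda Ha]].
    destruct (dw_cont _ _ _ _ _ (Hy tau (conj (proj1 Htau) (Rlt_le _ _ (proj2 Htau))) k) r Hr)
      as [db [Hdb Hb]].
    exists (Rmin da db); split; [apply Rmin_pos; auto|].
    intros s Hs Hsd. split.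
    - apply Ha; auto. eapply Rlt_le_trans; [apply Hsd|apply Rmin_l].
    - rewrite Heq. apply Hb; auto. eapply Rlt_le_trans; [apply Hsd|apply Rmin_r]. }
  set (dl := Rmin (Rmin (d1 / 2) (r / 2)) (Rmin (/ (2 * (L + 1))) (t - tau))).
  assert (Hdl1 : dl <= d1 / 2) by (unfold dl; eapply Rle_trans; apply Rmin_l).
  assert (Hdl2 : dl <= r / 2) by (unfold dl; eapply Rle_trans; [apply Rmin_l|apply Rmin_r]).
  assert (Hdl3 : dl <= / (2 * (L + 1))) by (unfold dl; eapply Rle_trans; [apply Rmin_r|apply Rmin_l]).
  assert (Hdl4 : dl <= t - tau) by (unfold dl; eapply Rle_trans; [apply Rmin_r|apply Rmin_r]).
  assert (Hdlp : 0 < dl).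
  { unfold dl. repeat apply Rmin_pos; try lra. apply Rinv_0_lt_compat; lra. }
  exists dl; split; [auto|split; [lra|]].
  assert (Hin : forall s, tau <= s <= tau + dl -> forall j,
             Rabs (x s j - x tau j) < r /\ Rabs (y s j - x tau j) < r).
  { intros s Hs j. apply H1; [lra|]. rewrite Rabs_right; lra. }
  assert (Hind : forall m s, tau <= s <= tau + dl -> forall j,
             Rabs (x s j - y s j) <= 2 * r * (/2) ^ m).
  { induction m as [|m IH]; intros s Hs j.
    - simpl. destruct (Hin s Hs j) as [A B].
      replace (x s j - y s j) with ((x s j - x tau j) - (y s j - x tau j)) by ring.
      eapply Rle_trans; [apply Rabs_triang|]. rewrite Rabs_Ropp. lra.
    - assert (Hm := mvi tau s (fun u => x u j - y u j)
                 (fun u => F u (x u) j - F u (y u) j) (L * (2 * r * (/2) ^ m))).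
      simpl in Hm. rewrite Heq, Rminus_diag, Rminus_0_r in Hm.
      assert (Hpw : 0 <= 2 * r * (/2) ^ m) by (apply Rmult_le_pos; [lra|apply pow_le; lra]).
      eapply Rle_trans; [apply Hm|].
      + lra.
      + intros u Hu. apply dw_sub; (apply (dw_restrict 0 t); [|lra|lra]).
        * apply Hx; lra.
        * apply Hy; lra.
      + intros u Hu. apply HLip.
        * rewrite Rabs_right; lra.
        * intros j'; apply (Hin u ltac:(lra) j').
        * intros j'; apply (Hin u ltac:(lra) j').
        * intros j'; apply IH; lra.
      + simpl. 
        assert (L * dl <= / 2).
        { apply Rle_trans with (L * / (2 * (L + 1))).
          - apply Rmult_le_compat_l; lra.
          - apply Rmult_le_reg_r with (2 * (L + 1)); [lra|].
            rewrite Rmult_assoc, Rinv_l by lra. nra. }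
        apply Rle_trans with (L * (2 * r * (/2)^m) * dl).
        * apply Rmult_le_compat_l; [apply Rmult_le_pos; auto|lra].
        * replace (L * (2 * r * (/ 2) ^ m) * dl) with ((L * dl) * (2 * r * (/ 2) ^ m)) by ring.
          replace (2 * r * (/ 2 * (/ 2) ^ m)) with (/2 * (2 * r * (/ 2) ^ m)) by ring.
          apply Rmult_le_compat_r; auto. }
  intros s Hs k.
  assert (Z := small_zero (x s k - y s k) (2 * r) ltac:(lra) (fun m => Hind m s Hs k)).
  lra.
Qed.
Lemma ode_unique n (F : R -> vec n -> vec n) (Hlip : loc_lipschitz F) t x y :
  sol F x t -> sol F y t -> x 0 = y 0 -> forall s, 0 <= s <= t -> forall k, x s k = y s k.
Proof.
  intros Hx Hy H0 s Hs.
  set (E := fun tau => 0 <= tau <= t /\ forall s, 0 <= s <= tau -> forall k, x s k = y s k).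
  destruct (completeness E) as [T [HTub HTl]].
  { exists t. intros z [Hz _]. lra. }
  { exists 0. split; [lra|]. intros s' Hs' k. replace s' with 0 by lra. rewrite H0; auto. }
  assert (HE0 : E 0).
  { split; [lra|]. intros s' Hs' k. replace s' with 0 by lra. rewrite H0; auto. }
  assert (HT0 : 0 <= T) by (apply HTub; auto).
  assert (HTt : T <= t) by (apply HTl; intros z [Hz _]; lra).
  assert (Hbelow : forall s, 0 <= s < T -> forall k, x s k = y s k).
  { intros s' Hs' k. destruct (Rle_dec T s') as [|Hn]; [lra|].
    assert (exists tau, E tau /\ s' < tau) as [tau [[_ Htau] Hlt]].
    { apply Classical_Prop.NNPP. intros Hno. apply Hn. apply HTl.
      intros z Hz. destruct (Rle_dec z s'); auto. exfalso; apply Hno. exists z; split; auto; lra. }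
    apply Htau; lra. }
  assert (HTeq : forall k, x T k = y T k).
  { intros k. destruct (Req_dec T 0) as [->|HTn]; [rewrite H0; auto|].
    apply Rminus_diag_uniq. apply Classical_Prop.NNPP. intros Hne.
    set (e := Rabs (x T k - y T k)).
    assert (He : 0 < e) by (apply Rabs_pos_lt; auto).
    destruct (dw_cont _ _ _ _ _ (Hx T (conj HT0 HTt) k) (e/2)) as [da [Hda Ha]]; [lra|].
    destruct (dw_cont _ _ _ _ _ (Hy T (conj HT0 HTt) k) (e/2)) as [db [Hdb Hb]]; [lra|].
    set (u := Rmax 0 (T - Rmin da db / 2)).
    assert (Hm : 0 < Rmin da db) by (apply Rmin_pos; auto).
    assert (Hu1 : 0 <= u < T).
    { unfold u, Rmax; destruct Rle_dec; lra. }
    assert (Hu2 : Rabs (u - T) < Rmin da db).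
    { unfold u, Rmax; destruct Rle_dec; rewrite Rabs_left; lra. }
    assert (A := Ha u (Rlt_le_trans _ _ _ Hu2 (Rmin_l _ _)) ltac:(lra)).
    assert (B := Hb u (Rlt_le_trans _ _ _ Hu2 (Rmin_r _ _)) ltac:(lra)).
    rewrite (Hbelow u Hu1 k) in A.
    assert (e <= Rabs (y u k - x T k) + Rabs (y u k - y T k)).
    { unfold e. replace (x T k - y T k) with (-(y u k - x T k) + (y u k - y T k)) by ring.
      eapply Rle_trans; [apply Rabs_triang|]. rewrite Rabs_Ropp. lra. }
    lra. }
  assert (HET : E T).
  { split; [lra|]. intros s' Hs' k. destruct (Req_dec s' T) as [->|]; auto.
    apply Hbelow; lra. }
  destruct (Req_dec T t) as [HTe|HTne].
  - apply HET; lra.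
  - destruct (ode_local n F Hlip t x y T Hx Hy ltac:(lra)) as [dl [Hdl [Hdt Hloc]]].
    { apply functional_extensionality; auto. }
    assert (E (T + dl)).
    { split; [lra|]. intros s' Hs' k. destruct (Rle_dec s' T).
      - apply HET; lra.
      - apply Hloc; lra. }
    assert (T + dl <= T) by (apply HTub; auto). lra.
Qed.
Lemma sig_ext {A : Type} {P : A -> Prop} (a b : {x | P x}) :
  proj1_sig a = proj1_sig b -> a = b.
Proof. destruct a, b; simpl; intros ->; f_equal; apply proof_irrelevance. Qed.

Definition GE {Sigma O : Type} (T : TSys Sigma O) (e : tS T * Sigma * tS T) : Prop :=
  exists t, tD T (fst (fst e)) (snd (fst e), t) (snd e).

Record idx {Sigma O : Type} (T : TSys Sigma O) (n : nat) : Type := mkIdx {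
  iF : tS T -> R -> vec n -> vec n;
  iR : {e | GE T e} -> vec n -> vec n;
  iv : tS T -> vec n;
  iF_cont : forall m, cont2 (iF m);
  iF_lip : forall m, loc_lipschitz (iF m);
  itr : forall m a t m', tD T m (a, t) m' ->
     exists x : R -> vec n, x 0 = iv m /\ sol (iF m) x (proj1_sig t) /\
       forall he, iR (exist _ (m, a, m') he) (x (proj1_sig t)) = iv m'
}.
Arguments iF {Sigma O T n}. Arguments iR {Sigma O T n}. Arguments iv {Sigma O T n}.
Arguments iF_cont {Sigma O T n}. Arguments iF_lip {Sigma O T n}. Arguments itr {Sigma O T n}.

Definition Gind {Sigma O : Type} (T : TSys Sigma O) : Type := {n : nat & idx T n}.

Definition Gobj {Sigma O : Type} (T : TSys Sigma O) : HSys Sigma O := {|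
  hM := tS T;
  hI := Gind T;
  hn := fun i => projT1 i;
  hE := GE T;
  hG := fun e sg => exists t, tD T (fst (fst (proj1_sig e))) (snd (fst (proj1_sig e)), t) (snd (proj1_sig e)) /\
          forall i : Gind T, (exists x, x 0 = iv (projT2 i) (fst (fst (proj1_sig e))) /\
               sol (iF (projT2 i) (fst (fst (proj1_sig e)))) x (proj1_sig t) /\ x (proj1_sig t) = sg i) /\
             iR (projT2 i) e (sg i) = iv (projT2 i) (snd (proj1_sig e));
  hR := fun e i x => iR (projT2 i) e x;
  hF := fun m i => iF (projT2 i) m;
  hF_cont := fun m i => iF_cont (projT2 i) m;
  hF_lip := fun m i => iF_lip (projT2 i) m;
  hInv := fun m sg => exists a t m', tD T m (a, t) m' /\ exists s, 0 <= s <= proj1_sig t /\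
          forall i : Gind T, exists x, x 0 = iv (projT2 i) m /\ sol (iF (projT2 i) m) x s /\ x s = sg i;
  hm0 := ti T;
  hs0 := fun i => iv (projT2 i) (ti T);
  ho := fun m _ => tw T m
|}.
Lemma valid_app {Sigma O : Type} (T : TSys Sigma O) s l1 l2 :
  valid_from T s (l1 ++ l2) <-> valid_from T s l1 /\ valid_from T (last_st T s l1) l2.
Proof.
  revert s; induction l1 as [|[a s'] l1 IH]; intros s; simpl.
  - tauto.
  - rewrite IH. tauto.
Qed.

Lemma last_app {Sigma O : Type} (T : TSys Sigma O) s l1 l2 :
  last_st T s (l1 ++ l2) = last_st T (last_st T s l1) l2.
Proof. revert s; induction l1 as [|[a s'] l1 IH]; intros s; simpl; auto. Qed.

Lemma last_single {Sigma O : Type} (T : TSys Sigma O) s l a s' :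
  last_st T s (l ++ (a, s') :: nil) = s'.
Proof. rewrite last_app. reflexivity. Qed.

Lemma V_len {Sigma O : Type} (T : TSys Sigma O) (r0 : tS (V T)) l :
  valid_from (V T) r0 l -> length (proj1_sig (last_st (V T) r0 l)) = (length (proj1_sig r0) + length l)%nat.
Proof.
  revert r0; induction l as [|[a r] l IH]; intros r0 Hv; simpl in *.
  - lia.
  - destruct Hv as [[s' Hs'] Hv]. rewrite IH by auto. rewrite Hs', length_app. simpl. lia.
Qed.

Lemma V_unique {Sigma O : Type} (T : TSys Sigma O) (r0 : tS (V T)) l1 :
  forall l2, valid_from (V T) r0 l1 -> valid_from (V T) r0 l2 ->
  last_st (V T) r0 l1 = last_st (V T) r0 l2 -> l1 = l2.
Proof.
  induction l1 as [|x1 l1 IH] using rev_ind; intros l2 H1 H2 Heq.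
  - destruct l2 as [|x2 l2] using rev_ind; auto.
    apply (f_equal (fun r => length (proj1_sig r))) in Heq.
    rewrite (V_len _ _ (l2 ++ x2 :: nil)) in Heq by auto. rewrite length_app in Heq. simpl in Heq. lia.
  - destruct l2 as [|x2 l2 _] using rev_ind.
    + apply (f_equal (fun r => length (proj1_sig r))) in Heq.
      rewrite (V_len _ _ (l1 ++ x1 :: nil)) in Heq by auto. rewrite length_app in Heq. simpl in Heq. lia.
    + destruct x1 as [a1 r1], x2 as [a2 r2].
      rewrite !last_single in Heq. subst r2.
      apply valid_app in H1 as [H1 [[s1 Hs1] _]].
      apply valid_app in H2 as [H2 [[s2 Hs2] _]].
      rewrite Hs1 in Hs2. apply app_inj_tail in Hs2 as [Hp Hq].
      injection Hq as -> ->.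
      assert (Hl : last_st (V T) r0 l1 = last_st (V T) r0 l2) by (apply sig_ext; auto).
      rewrite (IH l2 H1 H2 Hl). reflexivity.
Qed.

Lemma V_exists {Sigma O : Type} (T : TSys Sigma O) (r : tS (V T)) :
  exists l, valid_from (V T) (ti (V T)) l /\ last_st (V T) (ti (V T)) l = r.
Proof.
  destruct r as [l p]. revert p.
  induction l as [|[a s] l IH] using rev_ind; intros p.
  - exists nil. split; simpl; auto. apply sig_ext; reflexivity.
  - assert (p' := p). apply valid_app in p' as [p1 _].
    destruct (IH p1) as [L [HL1 HL2]].
    exists (L ++ (a, exist _ (l ++ (a, s) :: nil) p) :: nil). split.
    + apply valid_app. split; auto. rewrite HL2. simpl. split; auto.
      exists s. reflexivity.
    + apply last_single.
Qed.

Lemma V_tree {Sigma O : Type} (T : TSys Sigma O) : is_tree (V T).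
Proof.
  intros r. destruct (V_exists T r) as [l [H1 H2]].
  exists l. split; [split; auto|].
  intros l' [H1' H2']. apply V_unique with (r0 := ti (V T)); auto. congruence.
Qed.
Definition valst {Sigma O : Type} (T : TSys Sigma O) (m : tS T) : hstate (Gobj T) :=
  fun i => iv (projT2 i) m.

Lemma G_reach {Sigma O : Type} (T : TSys Sigma O) c :
  reach (Gobj T) c -> snd c = valst T (fst c).
Proof.
  induction 1 as [|c a t c' _ IH Hs].
  - reflexivity.
  - destruct Hs as [_ [he [x [_ [_ [_ [Hg Hr]]]]]]]. rewrite Hr.
    apply functional_extensionality_dep; intros i.
    destruct Hg as [tt [_ Hg]]. exact (proj2 (Hg i)).
Qed.

Lemma sol_restrict {n} (F : R -> vec n -> vec n) x t s :
  sol F x t -> 0 <= s <= t -> sol F x s.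
Proof.
  intros H Hs u Hu k. apply (dw_restrict 0 t); try lra. apply H; lra.
Qed.

Definition cflow : R -> vec 1 -> vec 1 := fun _ _ _ => 1.

Lemma cflow_lip : loc_lipschitz cflow.
Proof.
  intros t0 x0. exists 1, 0. split; [lra|split; [lra|]].
  intros. unfold cflow. rewrite Rminus_diag, Rabs_R0. specialize (H2 k).
  pose proof (Rabs_pos (x k - y k)). lra.
Qed.

Lemma cflow_cont : cont2 cflow.
Proof.
  intros t0 x0 eps Heps. exists 1. split; [lra|]. intros. unfold cflow.
  rewrite Rminus_diag, Rabs_R0. lra.
Qed.

Lemma sol_id t : sol cflow (fun s _ => s) t.
Proof.
  intros s Hs k eps Heps. exists 1. split; [lra|]. intros h Hh _ _.
  unfold cflow. replace ((s + h - s) / h - 1) with 0 by (field; auto).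
  rewrite Rabs_R0; lra.
Qed.

Definition clock_idx {Sigma O : Type} (T : TSys Sigma O) : idx T 1.
Proof.
  refine (mkIdx _ _ T 1 (fun _ => cflow) (fun _ _ _ => 0) (fun _ _ => 0)
            (fun _ => cflow_cont) (fun _ => cflow_lip) _).
  intros m a t m' _. exists (fun s _ => s). split; [reflexivity|]. split.
  - apply sol_id.
  - intros; reflexivity.
Defined.

Lemma clock_val x t : 0 <= t -> x 0 = (fun _ => 0) -> sol cflow x t -> x t Fin.F1 = t.
Proof.
  intros Ht H0 Hs.
  apply (ode_unique 1 cflow cflow_lip t x (fun s _ => s) Hs (sol_id t) H0 t); lra.
Qed.

Lemma G_step {Sigma O : Type} (T : TSys Sigma O) c a t c' :
  reach (Gobj T) c -> hstep (Gobj T) c a t c' ->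
  exists tt : nnR, proj1_sig tt = t /\ tD T (fst c) (a, tt) (fst c').
Proof.
  intros Hr Hs. pose proof (G_reach T c Hr) as Hv.
  destruct Hs as [Ht0 [he [x [Hx0 [Hxd [_ [Hg _]]]]]]].
  destruct Hg as [tt [Htr Hg]]. exists tt. split; auto.
  set (ic := existT (fun n => idx T n) 1%nat (clock_idx T) : Gind T).
  destruct (Hg ic) as [[y [Hy0 [Hys Hyt]]] _].
  simpl in Hy0, Hys, Hyt.
  assert (A := clock_val y (proj1_sig tt) (proj2_sig tt) Hy0 Hys).
  assert (B : x ic t Fin.F1 = t).
  { apply clock_val; [exact Ht0| rewrite Hx0, Hv; reflexivity | exact (Hxd ic)]. }
  rewrite Hyt in A. simpl in A. lra.
Qed.

Lemma T_step_G {Sigma O : Type} (T : TSys Sigma O) m a (tt : nnR) m' :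
  tD T m (a, tt) m' -> hstep (Gobj T) (m, valst T m) a (proj1_sig tt) (m', valst T m').
Proof.
  intros Htr.
  set (x := fun i : Gind T =>
         proj1_sig (constructive_indefinite_description _ (itr (projT2 i) m a tt m' Htr))).
  assert (Hx : forall i, x i 0 = iv (projT2 i) m /\ sol (iF (projT2 i) m) (x i) (proj1_sig tt) /\
            forall he, iR (projT2 i) (exist _ (m, a, m') he) (x i (proj1_sig tt)) = iv (projT2 i) m').
  { intros i. unfold x. destruct constructive_indefinite_description as [y Hy]. exact Hy. }
  split; [exact (proj2_sig tt)|].
  assert (he : GE T (m, a, m')) by (exists tt; exact Htr).
  exists he, x. split; [|split; [|split; [|split]]].
  - intros i. apply Hx.
  - intros i. apply Hx.
  - intros s Hs. simpl. exists a, tt, m'. split; auto. exists s. split; auto.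
    intros i. exists (x i). split; [apply Hx|split; [|reflexivity]].
    apply sol_restrict with (proj1_sig tt); auto. apply Hx.
  - simpl. exists tt. split; auto. intros i. split.
    + exists (x i). split; [apply Hx|split; [apply Hx|reflexivity]].
    + apply Hx.
  - simpl. apply functional_extensionality_dep; intros i. symmetry. apply Hx.
Qed.
Definition emap {Sigma O : Type} (T : TSys Sigma O) (l : list (Lab Sigma * tS T))
  : list (Lab Sigma * config (Gobj T)) :=
  map (fun p => (fst p, (snd p, valst T (snd p)))) l.

Definition tmap {Sigma O : Type} (T : TSys Sigma O) (l : list (Lab Sigma * config (Gobj T)))
  : list (Lab Sigma * tS T) :=
  map (fun p => (fst p, fst (snd p))) l.

Lemma emap_valid {Sigma O : Type} (T : TSys Sigma O) m0 l :
  valid_from T m0 l -> valid_from (K (Gobj T)) (m0, valst T m0) (emap T l).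
Proof.
  revert m0; induction l as [|[[a tt] m1] l IH]; intros m0 Hv; simpl in *; auto.
  destruct Hv as [H1 H2]. split; auto. apply T_step_G; auto.
Qed.

Lemma emap_last {Sigma O : Type} (T : TSys Sigma O) m0 l :
  last_st (K (Gobj T)) (m0, valst T m0) (emap T l) = (last_st T m0 l, valst T (last_st T m0 l)).
Proof. revert m0; induction l as [|[lab m1] l IH]; intros m0; simpl; auto. Qed.

Lemma valid_reach {Sigma O : Type} (S : HSys Sigma O) l : forall c,
  reach S c -> valid_from (K S) c l -> reach S (last_st (K S) c l).
Proof.
  induction l as [|[[a tt] c1] l IH]; intros c Hr Hv; simpl in *; auto.
  destruct Hv as [H1 H2]. apply IH; auto. eapply reachS; eauto.
Qed.

Lemma Grun_shape {Sigma O : Type} (T : TSys Sigma O) l : forall c,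
  reach (Gobj T) c -> valid_from (K (Gobj T)) c l ->
  l = emap T (tmap T l) /\ valid_from T (fst c) (tmap T l) /\
  last_st T (fst c) (tmap T l) = fst (last_st (K (Gobj T)) c l).
Proof.
  induction l as [|[[a tt] c1] l IH]; intros c Hr Hv; simpl in *; auto.
  destruct Hv as [H1 H2].
  assert (Hr1 : reach (Gobj T) c1) by (eapply reachS; eauto).
  destruct (IH c1 Hr1 H2) as [E1 [E2 E3]].
  destruct (G_step T c a _ c1 Hr H1) as [tt' [Htt Htr]].
  assert (tt' = tt) by (apply sig_ext; auto). subst tt'.
  split; [|split; [split; auto|auto]].
  rewrite <- E1. f_equal. f_equal. destruct c1 as [m1 s1]. simpl.
  f_equal. apply (G_reach T _ Hr1).
Qed.

Lemma hmap_last {Sigma O : Type} (d : O -> O -> R) (S1 S2 : HSys Sigma O) (h : HSmor d S1 S2) l :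
  forall c, last_st (K S2) (kmap h c) (hmap h l) = kmap h (last_st (K S1) c l).
Proof. induction l as [|[lab c1] l IH]; intros c; simpl; auto. Qed.

Lemma kmap_init {Sigma O : Type} (d : O -> O -> R) (S1 S2 : HSys Sigma O) (h : HSmor d S1 S2) :
  kmap h (ti (K S1)) = ti (K S2).
Proof.
  unfold kmap; simpl. rewrite (f_init _ _ _ _ _ h).
  rewrite (f_s0 _ _ _ _ _ h). reflexivity.
Qed.


Definition trun {Sigma O : Type} (T : TSys Sigma O) (hT : is_tree T) (m : tS T)
  : list (Lab Sigma * tS T) :=
  proj1_sig (constructive_indefinite_description _ (hT m)).

Lemma trun_spec {Sigma O : Type} (T : TSys Sigma O) (hT : is_tree T) m :
  valid_from T (ti T) (trun T hT m) /\ last_st T (ti T) (trun T hT m) = m.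
Proof. unfold trun. destruct (constructive_indefinite_description _ (hT m)) as [l Hl]. simpl. exact (proj1 Hl). Qed.

Lemma trun_uniq {Sigma O : Type} (T : TSys Sigma O) (hT : is_tree T) m l :
  valid_from T (ti T) l -> last_st T (ti T) l = m -> l = trun T hT m.
Proof.
  intros H1 H2. unfold trun. destruct (constructive_indefinite_description _ (hT m)) as [l' [Hl' Hu]].
  simpl. symmetry. apply Hu. auto.
Qed.

Definition eta_f {Sigma O : Type} (T : TSys Sigma O) (hT : is_tree T) (m : tS T) : tS (H (Gobj T)) :=
  exist _ (emap T (trun T hT m)) (emap_valid T (ti T) _ (proj1 (trun_spec T hT m))).

Lemma eta_last {Sigma O : Type} (T : TSys Sigma O) (hT : is_tree T) m :
  last_st (K (Gobj T)) (ti (K (Gobj T))) (proj1_sig (eta_f T hT m)) = (m, valst T m).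
Proof.
  change (last_st (K (Gobj T)) (ti T, valst T (ti T)) (emap T (trun T hT m)) = (m, valst T m)).
  rewrite emap_last. rewrite (proj2 (trun_spec T hT m)). reflexivity.
Qed.

Definition eta_m {Sigma O : Type} (d : O -> O -> R) (d_refl : forall x, d x x = 0)
  (T : TSys Sigma O) (hT : is_tree T) : TSmor d T (H (Gobj T)).
Proof.
  refine {| tf := eta_f T hT |}.
  - apply sig_ext. simpl. 
    rewrite <- (trun_uniq T hT (ti T) nil); simpl; auto.
  - intros m lab m' Htr. simpl. exists (m', valst T m').
    rewrite <- (trun_uniq T hT m' (trun T hT m ++ (lab, m') :: nil)).
    + unfold emap. rewrite map_app. reflexivity.
    + apply valid_app. split; [apply trun_spec|]. rewrite (proj2 (trun_spec T hT m)).
      simpl. auto.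
    + apply last_single.
  - exists 0. split; [lra|]. intros m.
    change (tw (H (Gobj T)) (eta_f T hT m)) with
      (tw (K (Gobj T)) (last_st (K (Gobj T)) (ti (K (Gobj T))) (proj1_sig (eta_f T hT m)))).
    rewrite eta_last. simpl. rewrite d_refl. lra.
Defined.

Definition k_f {Sigma O : Type} (T : TSys Sigma O) (r : tS (H (Gobj T))) : tS T :=
  fst (last_st (K (Gobj T)) (ti (K (Gobj T))) (proj1_sig r)).

Definition k_m {Sigma O : Type} (d : O -> O -> R) (d_refl : forall x, d x x = 0)
  (T : TSys Sigma O) : TSmor d (H (Gobj T)) T.
Proof.
  refine {| tf := k_f T |}.
  - reflexivity.
  - intros r lab r' [s' Hs']. unfold k_f. rewrite Hs'. rewrite last_single.
    assert (Hv : valid_from (K (Gobj T)) (ti (K (Gobj T))) (proj1_sig r')) by exact (proj2_sig r').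
    rewrite Hs' in Hv.
    apply valid_app in Hv as [Hv1 [Hst _]].
    assert (Hr := valid_reach (Gobj T) _ _ (reach0 _ _ (Gobj T)) Hv1).
    destruct lab as [a tt].
    destruct (G_step T _ a _ s' Hr Hst) as [tt' [Htt Htr]].
    assert (tt' = tt) by (apply sig_ext; auto). subst tt'. exact Htr.
  - exists 0. split; [lra|]. intros r. simpl. rewrite d_refl. lra.
Defined.
Definition lastg {Sigma O : Type} {d : O -> O -> R} {T : TSys Sigma O} {S : HSys Sigma O}
  (g : TSmor d T (H S)) (m : tS T) : config S :=
  last_st (K S) (ti (K S)) (proj1_sig (tf g m)).

Definition fMg {Sigma O : Type} {d : O -> O -> R} {T : TSys Sigma O} {S : HSys Sigma O}
  (g : TSmor d T (H S)) (m : tS T) : hM S := fst (lastg g m).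

Lemma g_step {Sigma O : Type} {d : O -> O -> R} {T : TSys Sigma O} {S : HSys Sigma O}
  (g : TSmor d T (H S)) m a (tt : nnR) m' :
  tD T m (a, tt) m' -> hstep S (lastg g m) a (proj1_sig tt) (lastg g m').
Proof.
  intros Htr. destruct (tf_tr _ _ _ _ _ g m (a, tt) m' Htr) as [s' Hs'].
  assert (Hv : valid_from (K S) (ti (K S)) (proj1_sig (tf g m'))) by exact (proj2_sig (tf g m')).
  rewrite Hs' in Hv. apply valid_app in Hv as [_ [Hst _]].
  assert (E : lastg g m' = s') by (unfold lastg; rewrite Hs', last_app; reflexivity).
  rewrite E. exact Hst.
Qed.

Lemma g_map {Sigma O : Type} {d : O -> O -> R} {T : TSys Sigma O} {S : HSys Sigma O}
  (g : TSmor d T (H S)) l :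
  valid_from T (ti T) l ->
  proj1_sig (tf g (last_st T (ti T) l)) = map (fun p => (fst p, lastg g (snd p))) l.
Proof.
  induction l as [|[lab m'] l IH] using rev_ind; intros Hv.
  - simpl. rewrite (tf_init _ _ _ _ _ g). reflexivity.
  - apply valid_app in Hv as [Hv1 [Htr _]]. rewrite last_single, map_app.
    rewrite <- IH by auto.
    destruct (tf_tr _ _ _ _ _ g _ lab m' Htr) as [s' Hs'].
    rewrite Hs'. simpl. f_equal. f_equal. f_equal.
    unfold lastg. rewrite Hs', last_app. reflexivity.
Qed.

Lemma fedge {Sigma O : Type} {d : O -> O -> R} {T : TSys Sigma O} {S : HSys Sigma O}
  (g : TSmor d T (H S)) (e : tS T * Sigma * tS T) :
  GE T e -> hE S (fMg g (fst (fst e)), snd (fst e), fMg g (snd e)).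
Proof.
  destruct e as [[m a] m']. intros [tt Htr].
  destruct (g_step g _ _ _ _ Htr) as [_ [he _]]. exact he.
Qed.

Lemma gitr {Sigma O : Type} {d : O -> O -> R} {T : TSys Sigma O} {S : HSys Sigma O}
  (g : TSmor d T (H S)) (i' : hI S) :
  forall m a (tt : nnR) m', tD T m (a, tt) m' ->
    exists x : R -> vec (hn S i'), x 0 = snd (lastg g m) i' /\
      sol (hF S (fMg g m) i') x (proj1_sig tt) /\
      forall he, hR S (exist _ _ (fedge g (m, a, m') he)) i' (x (proj1_sig tt)) = snd (lastg g m') i'.
Proof.
  intros m a tt m' Htr.
  destruct (g_step g _ _ _ _ Htr) as [_ [heS [x [Hx0 [Hxd [_ [_ Hr]]]]]]].
  exists (x i'). split; [apply Hx0|split; [exact (Hxd i')|]].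
  intros he. rewrite Hr. cbv beta. f_equal. apply sig_ext. reflexivity.
Qed.

Definition fIg {Sigma O : Type} {d : O -> O -> R} {T : TSys Sigma O} {S : HSys Sigma O}
  (g : TSmor d T (H S)) (i' : hI S) : Gind T :=
  existT _ (hn S i')
    (mkIdx _ _ T (hn S i') (fun m => hF S (fMg g m) i')
       (fun e => hR S (exist _ _ (fedge g (proj1_sig e) (proj2_sig e))) i')
       (fun m => snd (lastg g m) i')
       (fun m => hF_cont _ _ S _ i') (fun m => hF_lip _ _ S _ i') (gitr g i')).

Definition h_g {Sigma O : Type} {d : O -> O -> R} {T : TSys Sigma O} {S : HSys Sigma O}
  (g : TSmor d T (H S)) : HSmor d (Gobj T) S.
Proof.
  refine (@Build_HSmor Sigma O d (Gobj T) S (fMg g) (fIg g) _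
            (fun m a m' he => fedge g (m, a, m') he) (fun i' => eq_refl) _ _ _ _ _ _).
  - change (fst (last_st (K S) (ti (K S)) (proj1_sig (tf g (ti T)))) = hm0 S).
    rewrite (tf_init _ _ _ _ _ g). reflexivity.
  - intros; reflexivity.
  - intros; reflexivity.
  - unfold transport. apply functional_extensionality_dep; intros i'. simpl.
    change (snd (last_st (K S) (ti (K S)) (proj1_sig (tf g (ti T)))) i' = hs0 S i').
    rewrite (tf_init _ _ _ _ _ g). reflexivity.
  - intros m sg [a [tt [m' [Htr [s [Hs Hsg]]]]]].
    destruct (g_step g _ _ _ _ Htr) as [_ [heS [x [Hx0 [Hxd [Hinv _]]]]]].
    assert (E : transport (Gobj T) S (fIg g) (fun i' => eq_refl) sg = fun i' => x i' s).
    { apply functional_extensionality_dep; intros i'.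
      destruct (Hsg (fIg g i')) as [y [Hy0 [Hys Hyt]]].
      unfold transport, cast. simpl. simpl in Hyt. rewrite <- Hyt.
      apply functional_extensionality; intros k.
      apply (ode_unique _ (hF S (fMg g m) i') (hF_lip _ _ S _ i') s y (x i')); auto.
      - apply sol_restrict with (proj1_sig tt); auto. exact (Hxd i').
      - rewrite Hy0, Hx0. reflexivity.
      - lra. }
    rewrite E. apply Hinv. auto.
  - intros m a m' he sg [tt [Htr Hsg]]. simpl in Htr.
    destruct (g_step g _ _ _ _ Htr) as [_ [heS [x [Hx0 [Hxd [_ [Hg _]]]]]]].
    assert (E : transport (Gobj T) S (fIg g) (fun i' => eq_refl) sg = fun i' => x i' (proj1_sig tt)).
    { apply functional_extensionality_dep; intros i'.
      destruct (proj1 (Hsg (fIg g i'))) as [y [Hy0 [Hys Hyt]]].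
      unfold transport, cast. simpl. simpl in Hyt. rewrite <- Hyt.
      apply functional_extensionality; intros k.
      apply (ode_unique _ (hF S (fMg g m) i') (hF_lip _ _ S _ i') (proj1_sig tt) y (x i')); auto.
      - exact (Hxd i').
      - rewrite Hy0, Hx0. reflexivity.
      - split; [exact (proj2_sig tt)|lra]. }
    rewrite E.
    assert (E2 : exist (hE S) (fMg g m, a, fMg g m') (fedge g (m, a, m') he)
                 = exist (hE S) (fst (lastg g m), a, fst (lastg g m')) heS)
      by (apply sig_ext; reflexivity).
    cbv beta. rewrite E2. exact Hg.
  - destruct (tf_bounded _ _ _ _ _ g) as [eps [He Hb]]. exists eps. split; auto.
    intros m sg Hr. apply G_reach in Hr. simpl in Hr. subst sg.
    exact (Hb m).
Defined.
Lemma idx_eq {Sigma O : Type} (T : TSys Sigma O) (N : nat) (j0 : idx T N) (i : Gind T)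
  (p : projT1 i = N) :
  (forall m t x, cast p (iF (projT2 i) m t x) = iF j0 m t (cast p x)) ->
  (forall e x, cast p (iR (projT2 i) e x) = iR j0 e (cast p x)) ->
  (forall m, cast p (iv (projT2 i) m) = iv j0 m) ->
  existT _ N j0 = i.
Proof.
  destruct i as [n j]. simpl in p. destruct p. simpl. intros HF HR Hv.
  f_equal. destruct j as [F1 R1 v1 c1 l1 t1], j0 as [F2 R2 v2 c2 l2 t2]. simpl in *.
  assert (F2 = F1).
  { apply functional_extensionality; intro m; apply functional_extensionality; intro t;
    apply functional_extensionality; intro x; symmetry; apply HF. }
  assert (R2 = R1).
  { apply functional_extensionality; intro e; apply functional_extensionality; intro x;
    symmetry; apply HR. }
  assert (v2 = v1).
  { apply functional_extensionality; intro m; symmetry; apply Hv. }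
  subst. f_equal; apply proof_irrelevance.
Qed.

Theorem theorem4 (Sigma : Type) (O : Type) (d : O -> O -> R)
  (d_refl : forall x, d x x = 0)
  (d_sym : forall x y, d x y = d y x)
  (d_tri : forall x y z, d x z <= d x y + d y z) :
  (forall S : HSys Sigma O, is_tree (H S)) /\
  exists (Gobj : TSys Sigma O -> HSys Sigma O)
         (eta : forall T : TSys Sigma O, is_tree T -> TSmor d T (H (Gobj T))),
    (forall (T : TSys Sigma O) (hT : is_tree T) (S : HSys Sigma O) (g : TSmor d T (H S)),
        exists h : HSmor d (Gobj T) S,
          (forall x, hmap h (proj1_sig (tf (eta T hT) x)) = proj1_sig (tf g x)) /\
          (forall h' : HSmor d (Gobj T) S,
              (forall x, hmap h' (proj1_sig (tf (eta T hT) x)) = proj1_sig (tf g x)) ->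
              hs_eq h h')) /\
    (forall (T : TSys Sigma O) (hT : is_tree T),
        exists k : TSmor d (H (Gobj T)) T,
          (forall x, tf k (tf (eta T hT) x) = x) /\
          (forall y, proj1_sig (tf (eta T hT) (tf k y)) = proj1_sig y)) /\
    (forall (T : TSys Sigma O) (hT : is_tree T), ts_zero_bounded (eta T hT)) /\
    (forall (S : HSys Sigma O) (hT : is_tree (H S)) (e : HSmor d (Gobj (H S)) S),
        (forall x, hmap e (proj1_sig (tf (eta (H S) hT) x)) = proj1_sig x) ->
        hs_zero_bounded e).
Proof.
  split.
  { intros S. apply V_tree. }
  exists (@Gobj Sigma O), (eta_m d d_refl).
  assert (Hlast : forall (T : TSys Sigma O) (hT : is_tree T) (S : HSys Sigma O)
            (h : HSmor d (Gobj T) S) m,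
            last_st (K S) (ti (K S)) (hmap h (proj1_sig (eta_f T hT m))) = kmap h (m, valst T m)).
  { intros T hT S h m. rewrite <- (kmap_init d _ _ h). rewrite hmap_last.
    rewrite eta_last. reflexivity. }
  split; [|split; [|split]].
  - intros T hT S g. exists (h_g g). split.
    + intros x. change (hmap (h_g g) (emap T (trun T hT x)) = proj1_sig (tf g x)).
      assert (E := g_map g _ (proj1 (trun_spec T hT x))).
      rewrite (proj2 (trun_spec T hT x)) in E. rewrite E.
      unfold hmap, emap. rewrite map_map. apply map_ext. intros [lab m]. simpl.
      f_equal. symmetry. apply surjective_pairing.
    + intros h' Hh'.
      assert (Hl : forall m, kmap h' (m, valst T m) = lastg g m).
      { intros m. rewrite <- (Hlast T hT S h' m). unfold lastg. f_equal. exact (Hh' m). }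
      assert (HM : forall m, fM h' m = fMg g m).
      { intros m. exact (f_equal fst (Hl m)). }
      split.
      * intros m. symmetry. apply HM.
      * intros i'. simpl. unfold fIg.
        apply (idx_eq T (hn S i') _ (fI h' i') (f_dim h' i')).
        -- intros m t x. simpl. rewrite <- HM. exact (f_flow _ _ _ _ _ h' m i' t x).
        -- intros [[[m a] m'] he] x. simpl.
           etransitivity; [exact (f_reset _ _ _ _ _ h' m a m' he i' x)|]. f_equal.
           apply sig_ext. simpl. rewrite !HM. reflexivity.
        -- intros m. simpl.
           assert (A := f_equal snd (Hl m)). simpl in A.
           exact (f_equal (fun f => f i') A).
  - intros T hT. exists (k_m d d_refl T). split.
    + intros x. simpl. unfold k_f. rewrite eta_last. reflexivity.
    + intros y. simpl.
      assert (Hv : valid_from (K (Gobj T)) (ti (K (Gobj T))) (proj1_sig y)) by exact (proj2_sig y).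
      destruct (Grun_shape T (proj1_sig y) _ (reach0 _ _ (Gobj T)) Hv) as [E1 [E2 E3]].
      rewrite <- (trun_uniq T hT (k_f T y) (tmap T (proj1_sig y)) E2 E3).
      symmetry; exact E1.
  - intros T hT m. simpl.
    change (d (tw T m) (tw (K (Gobj T)) (last_st (K (Gobj T)) (ti (K (Gobj T))) (proj1_sig (eta_f T hT m)))) <= 0).
    rewrite eta_last. simpl. rewrite d_refl. lra.
  - intros S hT e He m sg Hr.
    apply G_reach in Hr. simpl in Hr. subst sg.
    assert (A := Hlast (H S) hT S e m).
    assert (He' : hmap e (proj1_sig (eta_f (H S) hT m)) = proj1_sig m) by exact (He m).
    rewrite He' in A.
    change (d (tw (K S) (last_st (K S) (ti (K S)) (proj1_sig m)))
              (tw (K S) (kmap e (m, valst (H S) m))) <= 0).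
    replace 0 with (d (tw (K S) (last_st (K S) (ti (K S)) (proj1_sig m)))
                      (tw (K S) (last_st (K S) (ti (K S)) (proj1_sig m)))) by apply d_refl.
    apply Req_le. f_equal. f_equal. exact (eq_sym A).
Qed.
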